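(* Let $\mathcal{H}$ be a complex Hilbert space and $X:=\mathcal{V}(\mathcal{H})_A\times(0,1)_L$ with the product topology. Let $\Gamma\underline{[0,1]}^{\succeq}$ be the set of functions $\gamma:\mathcal{V}(\mathcal{H})\to[0,1]$ with $\gamma(V')\geq\gamma(V)$ whenever $V'\subseteq V$, partially ordered pointwise. Define $\ell(\gamma)$, a truth value in $\mathrm{Sh}(X)$ (i.e. an open subset of $X$), as the union of the basic open sets ${\downarrow}V'\times(0,r')$ over all pairs $(V',r')$ with $V'\in\mathcal{V}(\mathcal{H})$, $r'\in(0,1]$ and $\gamma(V')\geq r'$. Then $\ell$ is injective, and for every family $(\gamma_i)_{i\in I}$ in $\Gamma\underline{[0,1]}^{\succeq}$ one has $\ell(\bigvee_i\gamma_i)=\bigvee_i\ell(\gamma_i)$, where $(\bigvee_i\gamma_i)(V)=\sup_i\gamma_i(V)$ and the join on the right is the join of truth values (union of open sets).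
   Context: $\mathcal{V}(\mathcal{H})$ is the poset, under inclusion, of non-trivial commutative von Neumann subalgebras of $B(\mathcal{H})$ containing the identity; $\mathcal{V}(\mathcal{H})_A$ is this poset with the topology whose open sets are the lower sets, and ${\downarrow}V:=\{V'\mid V'\subseteq V\}$. $(0,1)_L$ is the set $(0,1)$ with topology consisting of the sets $(0,r)$, $0\leq r\leq1$ (with $(0,0)=\emptyset$). The global elements of the subobject classifier of the sheaf topos $\mathrm{Sh}(X)$ are identified with the open subsets of $X$; equivalently $\ell(\gamma)$ assigns to each basic open $\langle V,r\rangle={\downarrow}V\times(0,r)$ the sieve $\{\langle V',r'\rangle\preceq\langle V,r\rangle\mid\gamma(V')\geq r'\}$, where $\langle V',r'\rangle\preceq\langle V,r\rangle$ iff $V'\subseteq V$ and $r'\leq r$. *)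

(* Defs.v *)
From HB Require Import structures.
From mathcomp Require Import all_boot all_order all_algebra.
From mathcomp Require Import complex.
From mathcomp Require Import all_classical all_reals.
Set Implicit Arguments. Unset Strict Implicit. Unset Printing Implicit Defensive.
Import Order.TTheory GRing.Theory Num.Theory.
Local Open Scope ring_scope.
Local Open Scope classical_set_scope.

Section Hilbert.
Variable R : realType.
Local Notation C := (R[i]).
Variable H : lmodType C.
Variable ip : H -> H -> C.

Definition is_inner_product : Prop :=
  [/\ (forall x y z, ip (x + y) z = ip x z + ip y z),
      (forall (a : C) x y, ip (a *: x) y = a * ip x y),
      (forall x y, ip y x = (ip x y)^*),
      (forall x, 0 <= ip x x) &
      (forall x, ip x x = 0 -> x = 0)].

Definition hnorm (x : H) : C := sqrtC (ip x x).

Definition is_complete : Prop :=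
  forall u : nat -> H,
    (forall e : C, 0 < e -> exists N : nat, forall m n : nat,
        (N <= m)%N -> (N <= n)%N -> hnorm (u m - u n) < e) ->
    exists l : H, forall e : C, 0 < e -> exists N : nat, forall n : nat,
        (N <= n)%N -> hnorm (u n - l) < e.

Definition is_complex_hilbert : Prop := is_inner_product /\ is_complete.

Definition is_linear_op (T : H -> H) : Prop :=
  forall (a : C) x y, T (a *: x + y) = a *: T x + T y.

Definition is_bounded_op (T : H -> H) : Prop :=
  is_linear_op T /\ exists M : C, forall x, hnorm (T x) <= M * hnorm x.

Definition is_adjoint (T T' : H -> H) : Prop :=
  forall x y, ip (T x) y = ip x (T' y).

Definition commutant (S : set (H -> H)) : set (H -> H) :=
  [set T | is_bounded_op T /\ forall A, S A -> T \o A = A \o T].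

Definition is_von_neumann (S : set (H -> H)) : Prop :=
  [/\ S `<=` is_bounded_op,
      S id,
      (forall A B, S A -> S B -> S (fun x => A x + B x)),
      (forall (a : C) A, S A -> S (fun x => a *: A x)) &
      (forall A B, S A -> S B -> S (A \o B))] /\
  (forall A, S A -> exists A', S A' /\ is_adjoint A A') /\
  S = commutant (commutant S).

Definition is_commutative_ops (S : set (H -> H)) : Prop :=
  forall A B, S A -> S B -> A \o B = B \o A.

Definition is_nontrivial_ops (S : set (H -> H)) : Prop :=
  S <> [set T | exists a : C, T = (fun x => a *: x)].

Definition is_context (S : set (H -> H)) : Prop :=
  [/\ is_von_neumann S, is_commutative_ops S & is_nontrivial_ops S].

Definition VH : Type := {S : set (H -> H) | is_context S}.

Definition VH_le (V1 V2 : VH) : Prop := proj1_sig V1 `<=` proj1_sig V2.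

(* points of X: pairs (V, s) with s in (0,1); we model subsets of X as sets of pairs *)
Definition Xpt : set (VH * R) := [set p | 0 < p.2 < 1].

Definition basic_open (V : VH) (r : R) : set (VH * R) :=
  [set p | VH_le p.1 V /\ 0 < p.2 < r].

Definition Gamma01 (g : VH -> R) : Prop :=
  (forall V, 0 <= g V <= 1) /\ (forall V V', VH_le V' V -> g V <= g V').

Definition ell (g : VH -> R) : set (VH * R) :=
  \bigcup_(q in [set q : VH * R | 0 < q.2 <= 1 /\ q.2 <= g q.1]) basic_open q.1 q.2.

Definition Gjoin (I : Type) (g : I -> VH -> R) : VH -> R :=
  fun V => sup [set g i V | i in [set: I]].

End Hilbert.

(* Main.v *)
Require Import Defs.
From HB Require Import structures.
From mathcomp Require Import all_boot all_order all_algebra.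
From mathcomp Require Import complex.
From mathcomp Require Import all_classical all_reals.
From mathcomp Require Import lra.
Import Order.TTheory GRing.Theory Num.Theory.
Local Open Scope ring_scope.
Local Open Scope classical_set_scope.

Theorem mainTheorem7 (R : realType) (H : lmodType R[i]) (ip : H -> H -> R[i])
    (hH : is_complex_hilbert ip) :
  (forall g1 g2 : VH ip -> R, Gamma01 g1 -> Gamma01 g2 ->
      ell g1 = ell g2 -> g1 = g2) /\
  (forall (I : Type) (g : I -> VH ip -> R), (forall i, Gamma01 (g i)) ->
      ell (Gjoin g) = \bigcup_(i in [set: I]) ell (g i)).
Proof.
have refl : forall V : VH ip, VH_le V V by move=> V x.
have key : forall g1 g2 : VH ip -> R, Gamma01 g1 -> Gamma01 g2 ->
    ell g1 = ell g2 -> forall V, ~ (g1 V < g2 V).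
  move=> g1 g2 [b1 a1] [b2 a2] E V lt.
  pose s := (g1 V + g2 V) / 2.
  have hs1 : g1 V < s by rewrite /s; lra.
  have hs2 : s < g2 V by rewrite /s; lra.
  have g10 : 0 <= g1 V by case/andP: (b1 V).
  have g21 : g2 V <= 1 by case/andP: (b2 V).
  have : ell g2 (V, s).
    exists (V, g2 V) => /=; first by split=> //=; apply/andP; split=> //; lra.
    by split => //=; apply/andP; split=> //; lra.
  rewrite -E => -[[V' r'] /= [/andP[r0 r1] rg] [le /andP[s0 sr]]].
  have := a1 _ _ le; simpl in *; lra.
split.
  move=> g1 g2 G1 G2 E; apply: funext => V.
  apply/eqP; rewrite eq_le !leNgt; apply/andP; split; apply/negP => h.
    exact: (key g2 g1 G2 G1 (esym E) V h).
  exact: (key g1 g2 G1 G2 E V h).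
move=> I g G; apply/seteqP; split.
  move=> [V s] [[V' r'] /= [/andP[r0 r1] rg] [le /andP[s0 sr]]].
  have ne : [set g i V' | i in [set: I]] !=set0.
    apply/set0P/negP => /eqP e; move: rg; rewrite /Gjoin e sup0; lra.
  have [y [i _ <-] hy] := sup_gt ne (lt_le_trans sr rg).
  exists i => //; exists (V', g i V') => /=.
    split => //; apply/andP; split; first lra.
    by case/andP: ((G i).1 V').
  by split => //; apply/andP; split.
move=> [V s] [i _ [[V' r'] /= [/andP[r0 r1] rg] [le /andP[s0 sr]]]].
exists (V', r') => //=; split => //=; first by rewrite r0 r1.
- apply: (le_trans rg); apply: ub_le_sup; last by exists i.
  by exists 1 => _ [j _ <-]; case/andP: ((G j).1 V').
- by rewrite s0 sr.
Qed.
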